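(* (i) Let $I,J$ be sets and $R\colon I\times J\to\{0,1\}\subseteq[0,1]$ a boolean ($\{0,1\}$-valued) relation. Then $f_R(x)\cdot f_R(y)\le f_R(x\cdot y)$ for all $x,y\in[0,1]^I$. (ii) Let $\mathbf A,\mathbf B$ be semisimple Pavelka algebras and $f\colon A\to B$, $g\colon B\to A$ with $f\leftrightarrows g$. If $f(x)\cdot f(y)\le f(x\cdot y)$ for all $x,y\in A$, then the relation $R\colon\mathrm{Spec_M}\mathbf A\times\mathrm{Spec_M}\mathbf B\to[0,1]$, $R(F,G)=\bigwedge_{a\in A}(f(a)/G\rightarrow a/F)$, is $\{0,1\}$-valued.
   Context: An MV-algebra $(A;\oplus,\neg,0)$ carries derived operations $1=\neg0$, $x\cdot y=\neg(\neg x\oplus\neg y)$, $x\rightarrow y=\neg x\oplus y$, order $x\le y$ iff $\neg x\oplus y=1$. The standard MV-algebra is $[0,1]$ with $x\oplus y=\min\{x+y,1\}$, $\neg x=1-x$. A Pavelka algebra is $\mathbf A=(A;\oplus,\neg,\{\mathbf r\mid r\in[0,1]\cap\mathbb Q\})$ with $(A;\oplus,\neg,\mathbf 0)$ an MV-algebra, $\mathbf r\oplus\mathbf s=\mathbf t$ whenever $\min\{r+s,1\}=t$, $\neg\mathbf r=\mathbf s$ whenever $1-r=s$. Filters are filters of the MV-reduct; $\mathrm{Spec_M}\mathbf A$ is the set of maximal proper filters; for $F\in\mathrm{Spec_M}\mathbf A$, $\mathbf A/F$ embeds uniquely into the standard Pavelka algebra $[0,1]$ and $x/F$ is identified with its image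 in $[0,1]$. $\mathbf A$ is semisimple if its MV-reduct is a subdirect product of simple MV-algebras. $f\leftrightarrows g$ means: $f,g$ monotone, $x\le f(y)$ iff $g(x)\le y$ for all $y\in A,x\in B$, and $\mathbf r\rightarrow f(y)=f(\mathbf r\rightarrow y)$ for all $y\in A$ and constants $\mathbf r$. For $R\colon I\times J\to[0,1]$: $f_R(x)(j)=\bigwedge_{i\in I}(R(i,j)\rightarrow x(i))$ for $x\in[0,1]^I$, with operations of $[0,1]$ applied componentwise. *)

(* Defs.v *)
From Stdlib Require Import Reals ClassicalEpsilon.
Open Scope R_scope.

Definition luk_oplus (x y : R) : R := Rmin (x + y) 1.
Definition luk_neg (x : R) : R := 1 - x.
Definition luk_mul (x y : R) : R := luk_neg (luk_oplus (luk_neg x) (luk_neg y)).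
Definition luk_imp (x y : R) : R := luk_oplus (luk_neg x) y.

Definition is_inf01 {I : Type} (h : I -> R) (m : R) : Prop :=
  0 <= m <= 1 /\ (forall i, m <= h i) /\
  (forall l, 0 <= l <= 1 -> (forall i, l <= h i) -> l <= m).
Definition inf01 {I : Type} (h : I -> R) : R :=
  epsilon (inhabits 0) (is_inf01 h).

Definition fR {I J : Type} (Rel : I -> J -> R) (x : I -> R) (j : J) : R :=
  inf01 (fun i => luk_imp (Rel i j) (x i)).

Record MVAlg := {
  mv_car :> Type;
  mv_oplus : mv_car -> mv_car -> mv_car;
  mv_neg : mv_car -> mv_car;
  mv_zero : mv_car;
  mv_assoc : forall x y z, mv_oplus x (mv_oplus y z) = mv_oplus (mv_oplus x y) z;
  mv_comm : forall x y, mv_oplus x y = mv_oplus y x;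
  mv_unit : forall x, mv_oplus x mv_zero = x;
  mv_negneg : forall x, mv_neg (mv_neg x) = x;
  mv_absorb : forall x, mv_oplus x (mv_neg mv_zero) = mv_neg mv_zero;
  mv_luk : forall x y, mv_oplus (mv_neg (mv_oplus (mv_neg x) y)) y
                     = mv_oplus (mv_neg (mv_oplus (mv_neg y) x)) x
}.
Arguments mv_oplus {m}.
Arguments mv_neg {m}.
Arguments mv_zero {m}.

Definition mv_one {A : MVAlg} : A := mv_neg mv_zero.
Definition mv_mul {A : MVAlg} (x y : A) : A := mv_neg (mv_oplus (mv_neg x) (mv_neg y)).
Definition mv_imp {A : MVAlg} (x y : A) : A := mv_oplus (mv_neg x) y.
Definition mv_le {A : MVAlg} (x y : A) : Prop := mv_oplus (mv_neg x) y = mv_one.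

Definition is_mv_hom {A B : MVAlg} (h : A -> B) : Prop :=
  (forall x y, h (mv_oplus x y) = mv_oplus (h x) (h y)) /\
  (forall x, h (mv_neg x) = mv_neg (h x)) /\ h mv_zero = mv_zero.

Definition is_filter {A : MVAlg} (F : A -> Prop) : Prop :=
  F mv_one /\ (forall x y, F x -> mv_le x y -> F y) /\
  (forall x y, F x -> F y -> F (mv_mul x y)).
Definition proper_filter {A : MVAlg} (F : A -> Prop) : Prop :=
  is_filter F /\ exists x, ~ F x.
Definition is_max_filter {A : MVAlg} (F : A -> Prop) : Prop :=
  proper_filter F /\
  forall G : A -> Prop, proper_filter G -> (forall x, F x -> G x) -> forall x, G x -> F x.

Definition is_simple (B : MVAlg) : Prop :=
  (mv_one : B) <> mv_zero /\
  forall G : B -> Prop, is_filter G ->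
    (forall x, G x <-> x = mv_one) \/ (forall x, G x).

(* semisimple: subdirect product of simple MV-algebras *)
Definition is_semisimple_mv (A : MVAlg) : Prop :=
  exists (K : Type) (B : K -> MVAlg) (h : forall k, A -> B k),
    (forall k, is_simple (B k)) /\ (forall k, is_mv_hom (h k)) /\
    (forall k (b : B k), exists a, h k a = b) /\
    (forall x y, (forall k, h k x = h k y) -> x = y).

Definition is_rat (r : R) : Prop := exists p q : Z, IZR q <> 0 /\ r = IZR p / IZR q.
Definition rat01 (r : R) : Prop := is_rat r /\ 0 <= r <= 1.

(* the constant r-bar is pav_c r, for r in [0,1] ∩ Q (values elsewhere irrelevant) *)
Record PavAlg := {
  pav_mv :> MVAlg;
  pav_c : R -> pav_mv;
  pav_c0 : pav_c 0 = mv_zero;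
  pav_c_oplus : forall r s, rat01 r -> rat01 s ->
     mv_oplus (pav_c r) (pav_c s) = pav_c (Rmin (r + s) 1);
  pav_c_neg : forall r, rat01 r -> mv_neg (pav_c r) = pav_c (1 - r)
}.

Definition is_std_hom (A : PavAlg) (phi : A -> R) : Prop :=
  (forall x, 0 <= phi x <= 1) /\
  (forall x y, phi (mv_oplus x y) = luk_oplus (phi x) (phi y)) /\
  (forall x, phi (mv_neg x) = luk_neg (phi x)) /\
  phi mv_zero = 0 /\
  (forall r, rat01 r -> phi (pav_c A r) = r).

Definition SpecM (A : PavAlg) : Type := { F : A -> Prop | is_max_filter F }.

(* x/F : image of x/F under the (unique) embedding A/F -> [0,1];
   equivalently phi x for the hom phi : A -> [0,1] with phi^{-1}(1) = F *)
Definition quot_val (A : PavAlg) (F : A -> Prop) (x : A) : R :=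
  epsilon (inhabits 0) (fun t => exists phi : A -> R,
     is_std_hom A phi /\ (forall a, phi a = 1 <-> F a) /\ phi x = t).

Definition is_semisimple (A : PavAlg) : Prop := is_semisimple_mv (pav_mv A).

Definition adjoint (A B : PavAlg) (f : A -> B) (g : B -> A) : Prop :=
  (forall x y : A, mv_le x y -> mv_le (f x) (f y)) /\
  (forall x y : B, mv_le x y -> mv_le (g x) (g y)) /\
  (forall (y : A) (x : B), mv_le x (f y) <-> mv_le (g x) y) /\
  (forall (r : R) (y : A), rat01 r ->
      mv_imp (pav_c B r) (f y) = f (mv_imp (pav_c A r) y)).

Definition relR (A B : PavAlg) (f : A -> B) (F : SpecM A) (G : SpecM B) : R :=
  inf01 (fun a : A => luk_imp (quot_val B (proj1_sig G) (f a)) (quot_val A (proj1_sig F) a)).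

(* Main.v *)
Require Import Defs.
From Stdlib Require Import Reals.
From Stdlib Require Import ClassicalEpsilon Classical FunctionalExtensionality Lra ZArith.
Open Scope R_scope.

Section MV.
Variable M : MVAlg.
Local Notation "x (+) y" := (@mv_oplus M x y) (at level 50, left associativity).
Local Notation "! x" := (@mv_neg M x) (at level 35, right associativity).
Local Notation "1m" := (@mv_one M).
Local Notation "0m" := (@mv_zero M).
Implicit Types x y z a b c d : M.

Lemma oA x y z : x (+) (y (+) z) = x (+) y (+) z. Proof. apply mv_assoc. Qed.
Lemma oC x y : x (+) y = y (+) x. Proof. apply mv_comm. Qed.
Lemma o0 x : x (+) 0m = x. Proof. apply mv_unit. Qed.
Lemma o0l x : 0m (+) x = x. Proof. rewrite oC; apply o0. Qed.
Lemma o1 x : x (+) 1m = 1m. Proof. apply mv_absorb. Qed.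
Lemma o1l x : 1m (+) x = 1m. Proof. rewrite oC; apply o1. Qed.
Lemma nn x : ! ! x = x. Proof. apply mv_negneg. Qed.
Lemma n1 : ! 1m = 0m. Proof. apply nn. Qed.
Lemma n0 : ! 0m = 1m. Proof. reflexivity. Qed.
Lemma luk x y : ! (! x (+) y) (+) y = ! (! y (+) x) (+) x. Proof. apply mv_luk. Qed.

Lemma nxx x : ! x (+) x = 1m.
Proof.
  pose proof (luk x 1m) as H. rewrite o1, n1, o0l in H. auto.
Qed.
Lemma xnx x : x (+) ! x = 1m. Proof. rewrite oC; apply nxx. Qed.

Lemma mle_refl x : mv_le x x. Proof. apply nxx. Qed.
Lemma le_oplus x w : mv_le x (x (+) w).
Proof. unfold mv_le. rewrite oA, nxx, o1l. reflexivity. Qed.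
Lemma le_oplus' x w : mv_le x (w (+) x).
Proof. rewrite oC; apply le_oplus. Qed.
Lemma le_ex x y : mv_le x y -> y = x (+) ! (! y (+) x).
Proof.
  unfold mv_le; intro H. rewrite oC, luk, H, n1, o0l. reflexivity.
Qed.
Lemma le_ex' x y : mv_le x y -> exists w, y = x (+) w.
Proof. intro H. apply le_ex in H. eauto. Qed.
Lemma mle_trans x y z : mv_le x y -> mv_le y z -> mv_le x z.
Proof.
  intros H1 H2. apply le_ex' in H1 as [w1 H1]. apply le_ex' in H2 as [w2 H2].
  rewrite H2, H1, <- oA. apply le_oplus.
Qed.
Lemma le_omono x y z : mv_le x y -> mv_le (x (+) z) (y (+) z).
Proof.
  intro H. apply le_ex' in H as [w H]. rewrite H.
  rewrite <- oA, (oC w z), oA. apply le_oplus.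
Qed.
Lemma le_omono2 x y z w : mv_le x y -> mv_le z w -> mv_le (x (+) z) (y (+) w).
Proof.
  intros H1 H2. apply mle_trans with (y (+) z). apply le_omono; auto.
  rewrite (oC y z), (oC y w). apply le_omono; auto.
Qed.
Lemma le_neg x y : mv_le x y -> mv_le (! y) (! x).
Proof. unfold mv_le; intro H. rewrite nn, oC. auto. Qed.
Lemma mle_1 x : mv_le x 1m. Proof. apply o1. Qed.
Lemma mle_0 x : mv_le 0m x. Proof. unfold mv_le. rewrite n0. apply o1l. Qed.

Lemma mC x y : mv_mul x y = mv_mul y x. Proof. unfold mv_mul. rewrite oC. auto. Qed.
Lemma mA x y z : mv_mul x (mv_mul y z) = mv_mul (mv_mul x y) z.
Proof. unfold mv_mul. rewrite !nn, oA. auto. Qed.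
Lemma m1 x : mv_mul x 1m = x. Proof. unfold mv_mul. rewrite n1, o0, nn. auto. Qed.
Lemma m1l x : mv_mul 1m x = x. Proof. rewrite mC; apply m1. Qed.
Lemma le_mmono x y z : mv_le x y -> mv_le (mv_mul x z) (mv_mul z y) -> True.
Proof. auto. Qed.
Lemma le_mmono1 x y z : mv_le x y -> mv_le (mv_mul x z) (mv_mul y z).
Proof. intro H. unfold mv_mul. apply le_neg, le_omono, le_neg, H. Qed.
Lemma le_mmono2 x y z w : mv_le x y -> mv_le z w -> mv_le (mv_mul x z) (mv_mul y w).
Proof.
  intros H1 H2. apply mle_trans with (mv_mul y z). apply le_mmono1; auto.
  rewrite (mC y z), (mC y w). apply le_mmono1; auto.
Qed.

Lemma resid a b c : mv_le (mv_mul a b) c <-> mv_le a (mv_imp b c).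
Proof. unfold mv_le, mv_mul, mv_imp. rewrite nn, oA. tauto. Qed.

Lemma modus x y : mv_le (mv_mul x (mv_imp x y)) y.
Proof.
  unfold mv_le, mv_mul, mv_imp. rewrite nn, <- oA, luk, (oC (! _) x), oA, nxx, o1l.
  reflexivity.
Qed.

Lemma lemD a b c : mv_le (mv_mul (a (+) b) c) (mv_mul a c (+) b).
Proof.
  apply (proj2 (resid (a (+) b) c _)). unfold mv_imp.
  assert (E : ! c (+) mv_mul a c = ! (c (+) a) (+) a).
  { unfold mv_mul. rewrite oC. pose proof (luk a (! c)) as H. rewrite nn in H.
    rewrite H. auto. }
  rewrite oA, E. apply le_omono. apply le_oplus'.
Qed.

Lemma imp_oplus a b c d :
  mv_le (mv_mul (mv_imp a b) (mv_imp c d)) (mv_imp (a (+) c) (b (+) d)).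
Proof.
  apply (proj1 (resid _ (a (+) c) (b (+) d))).
  set (p := mv_imp a b). set (q := mv_imp c d).
  replace (mv_mul (mv_mul p q) (a (+) c)) with (mv_mul (mv_mul (a (+) c) p) q)
    by (rewrite <- !mA; rewrite (mC q); rewrite !mA; rewrite (mC p); auto).
  apply mle_trans with (mv_mul (mv_mul a p (+) c) q).
  { apply le_mmono1, lemD. }
  rewrite oC.
  apply mle_trans with (mv_mul c q (+) mv_mul a p). apply lemD.
  rewrite (oC b d). apply le_omono2; apply modus.
Qed.

Lemma imp_trans x y z : mv_le (mv_mul (mv_imp x y) (mv_imp y z)) (mv_imp x z).
Proof.
  apply (proj1 (resid _ x z)). rewrite mC, mA.
  apply mle_trans with (mv_mul y (mv_imp y z)). apply le_mmono1, modus. apply modus.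
Qed.

Lemma prelin_core x z : mv_mul x z (+) (x (+) z) = x (+) z.
Proof.
  set (W := ! (! z (+) mv_mul x z)).
  assert (E1 : mv_mul x z (+) W = z).
  { unfold W. rewrite oC. rewrite luk. unfold mv_mul. rewrite nn, <- oA, nxx, o1, n1, o0l.
    auto. }
  assert (E2 : x (+) W = x (+) z).
  { assert (H : ! (x (+) z) (+) x = mv_mul x z (+) ! z).
    { pose proof (luk (! z) x) as H. rewrite nn in H. rewrite (oC z x) in H.
      rewrite H. unfold mv_mul. auto. }
    unfold W. rewrite (oC (! z)), <- H.
    rewrite oC, luk. rewrite (oA (! x) x z), nxx, o1l, n1, o0l. auto. }
  rewrite <- E2 at 1. rewrite oA, (oC _ x), <- oA, E1. auto.
Qed.

Lemma prelin x y : mv_imp (mv_imp x y) (mv_imp y x) = mv_imp y x.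
Proof.
  unfold mv_imp. rewrite <- (nn y) at 1. fold (mv_mul x (! y)) .
  rewrite (oC (! y) x). apply prelin_core.
Qed.

Fixpoint mpow (a : M) (n : nat) : M :=
  match n with O => 1m | S n => mv_mul a (mpow a n) end.

Lemma mpow_add a n m : mpow a (n + m) = mv_mul (mpow a n) (mpow a m).
Proof.
  induction n; simpl. rewrite m1l; auto. rewrite IHn, mA. auto.
Qed.

Lemma F_up (F : M -> Prop) x y : is_filter F -> F x -> mv_le x y -> F y.
Proof. intros [_ [H _]]; eauto. Qed.
Lemma F_mul (F : M -> Prop) x y : is_filter F -> F x -> F y -> F (mv_mul x y).
Proof. intros [_ [_ H]]; eauto. Qed.
Lemma F_one (F : M -> Prop) : is_filter F -> F 1m.
Proof. intros [H _]; auto. Qed.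

Lemma max_gen (F : M -> Prop) a : is_max_filter F -> ~ F a ->
  exists n, F (! mpow a n).
Proof.
  intros [[HF Hp] Hmax] Ha.
  set (G := fun y => exists f n, F f /\ mv_le (mv_mul f (mpow a n)) y).
  assert (HG : is_filter G).
  { split; [|split].
    - exists 1m, O. split. apply F_one; auto. apply mle_1.
    - intros x y [f [n [H1 H2]]] H3. exists f, n. split; auto. eapply mle_trans; eauto.
    - intros x y [f [n [H1 H2]]] [g [m [H3 H4]]]. exists (mv_mul f g), (n + m)%nat.
      split. apply F_mul; auto.
      rewrite mpow_add.
      replace (mv_mul (mv_mul f g) (mv_mul (mpow a n) (mpow a m)))
        with (mv_mul (mv_mul f (mpow a n)) (mv_mul g (mpow a m))).
      apply le_mmono2; auto.
      rewrite <- !mA. f_equal. rewrite (mA (mpow a n) g), (mC (mpow a n) g), <- mA. auto. }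
  destruct (classic (exists x, ~ G x)) as [Hx|Hx].
  - exfalso. apply Ha. apply (Hmax G). split; auto.
    intros x Fx. exists x, O. split; auto. simpl. rewrite m1. apply mle_refl.
    exists 1m, 1%nat. split. apply F_one; auto. simpl. rewrite m1, m1l. apply mle_refl.
  - assert (G 0m). { apply NNPP. intro. apply Hx. eauto. }
    destruct H as [f [n [H1 H2]]]. exists n.
    apply (F_up F f); auto. unfold mv_le, mv_mul in *. rewrite nn, o0 in H2. auto.
Qed.

Lemma lin_aux (F : M -> Prop) a b : is_max_filter F -> mv_le (mv_imp a b) b -> ~ F a -> F b.
Proof.
  intros HF Hab Ha. destruct (max_gen F a HF Ha) as [n Hn].
  assert (forall k, mv_le (mv_imp (mpow a k) b) b).
  { induction k; simpl.
    - unfold mv_imp. rewrite n1, o0l. apply mle_refl.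
    - apply mle_trans with (mv_imp a b); auto.
      unfold mv_imp, mv_mul. rewrite nn, <- oA. rewrite !(oC (! a)). apply le_omono. auto. }
  destruct HF as [[HF _] _].
  apply (F_up F (! mpow a n)); auto. eapply mle_trans; [|apply (H n)]. apply le_oplus.
Qed.

Lemma mv_linear (F : M -> Prop) x y : is_max_filter F -> F (mv_imp x y) \/ F (mv_imp y x).
Proof.
  intro HF. destruct (classic (F (mv_imp x y))); auto. right.
  apply (lin_aux F (mv_imp x y)); auto. rewrite prelin. apply mle_refl.
Qed.

End MV.

Ltac rmin := unfold Rmin, Rmax in *; repeat (destruct Rle_dec); try lra.

Lemma rat_Z z : is_rat (IZR z).
Proof. exists z, 1%Z. split. simpl; lra. simpl. field. Qed.
Lemma rat_add r s : is_rat r -> is_rat s -> is_rat (r + s).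
Proof.
  intros [p [q [Hq ->]]] [p' [q' [Hq' ->]]].
  exists (p * q' + p' * q)%Z, (q * q')%Z. rewrite mult_IZR. split.
  intro H. apply Rmult_integral in H. tauto.
  rewrite plus_IZR, !mult_IZR. field. tauto.
Qed.
Lemma rat_opp r : is_rat r -> is_rat (- r).
Proof.
  intros [p [q [Hq ->]]]. exists (- p)%Z, q. split; auto. rewrite opp_IZR. field; auto.
Qed.
Lemma rat01_0 : rat01 0. Proof. split. apply (rat_Z 0). lra. Qed.
Lemma rat01_1 : rat01 1. Proof. split. apply (rat_Z 1). lra. Qed.
Lemma rat01_c r : rat01 r -> rat01 (1 - r).
Proof.
  intros [H1 H2]. split. apply rat_add. apply (rat_Z 1). apply rat_opp; auto. lra.
Qed.
Lemma rat01_min r s : rat01 r -> rat01 s -> rat01 (Rmin (r + s) 1).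
Proof.
  intros [H1 H2] [H3 H4]. apply Rmin_case_strong; intro.
  split. apply rat_add; auto. lra. apply rat01_1.
Qed.

Lemma dense a b : a < b -> exists r, is_rat r /\ a < r < b.
Proof.
  intro Hab.
  destruct (archimed (/ (b - a))) as [H1 H2].
  set (N := IZR (up (/ (b - a)))) in *.
  assert (HN : 0 < N). { assert (0 < / (b - a)) by (apply Rinv_0_lt_compat; lra). lra. }
  destruct (archimed (a * N)) as [H3 H4].
  set (m := up (a * N)) in *.
  exists (IZR m / N). split.
  - exists m, (up (/ (b - a))). split. fold N. lra. reflexivity.
  - split.
    + apply Rmult_lt_reg_r with N; auto. unfold Rdiv. rewrite Rmult_assoc, Rinv_l; lra.
    + apply Rmult_lt_reg_r with N; auto. unfold Rdiv. rewrite Rmult_assoc, Rinv_l by lra.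
      assert (1 < (b - a) * N).
      { apply Rmult_lt_reg_l with (/ (b - a)). apply Rinv_0_lt_compat; lra.
        rewrite <- Rmult_assoc, Rinv_l by lra. lra. }
      lra.
Qed.

Lemma dense01 a b : 0 <= a -> a < b -> b <= 1 -> exists r, rat01 r /\ a < r < b.
Proof.
  intros. destruct (dense a b) as [r [H2 H3]]; auto. exists r. split; [split|]; auto; lra.
Qed.

Section SH.
Variable A : PavAlg.
Variable phi : A -> R.
Hypothesis Hphi : is_std_hom A phi.

Lemma sh_01 x : 0 <= phi x <= 1. Proof. apply Hphi. Qed.
Lemma sh_oplus x y : phi (mv_oplus x y) = Rmin (phi x + phi y) 1.
Proof. apply Hphi. Qed.
Lemma sh_neg x : phi (mv_neg x) = 1 - phi x.
Proof. apply Hphi. Qed.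
Lemma sh_zero : phi mv_zero = 0. Proof. apply Hphi. Qed.
Lemma sh_c r : rat01 r -> phi (pav_c A r) = r. Proof. apply Hphi. Qed.
Lemma sh_one : phi mv_one = 1. Proof. unfold mv_one. rewrite sh_neg, sh_zero. lra. Qed.
Lemma sh_mul x y : phi (mv_mul x y) = luk_mul (phi x) (phi y).
Proof. unfold mv_mul, luk_mul, luk_neg, luk_oplus. rewrite sh_neg, sh_oplus, !sh_neg. auto. Qed.
Lemma sh_imp x y : phi (mv_imp x y) = Rmin (1 - phi x + phi y) 1.
Proof. unfold mv_imp. rewrite sh_oplus, sh_neg. auto. Qed.
Lemma sh_le x y : mv_le x y -> phi x <= phi y.
Proof.
  unfold mv_le. intro H. pose proof (sh_one) as H1. rewrite <- H in H1.
  rewrite sh_oplus, sh_neg in H1. pose proof (sh_01 x). pose proof (sh_01 y). rmin.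
Qed.
End SH.

Lemma sh_unique (A : PavAlg) (F : A -> Prop) phi1 phi2 :
  is_std_hom A phi1 -> is_std_hom A phi2 ->
  (forall a, phi1 a = 1 <-> F a) -> (forall a, phi2 a = 1 <-> F a) ->
  forall x, phi1 x = phi2 x.
Proof.
  intros H1 H2 K1 K2.
  assert (E : forall phi, is_std_hom A phi -> forall r x, rat01 r ->
             (phi (mv_imp (pav_c A r) x) = 1 <-> r <= phi x)).
  { intros phi Hp r x Hr. rewrite sh_imp, sh_c; auto.
    pose proof (sh_01 A phi Hp x). split; intro; rmin. }
  assert (D : forall phi phi', is_std_hom A phi -> is_std_hom A phi' ->
            (forall a, phi a = 1 <-> F a) -> (forall a, phi' a = 1 <-> F a) ->
            forall x, ~ phi x < phi' x).
  { intros phi phi' Hp Hp' Kp Kp' x Hlt.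
    pose proof (sh_01 A phi Hp x). pose proof (sh_01 A phi' Hp' x).
    destruct (dense01 (phi x) (phi' x)) as [r [Hr Hr2]]; try lra.
    assert (F (mv_imp (pav_c A r) x)). { apply Kp'. apply E; auto. lra. }
    apply Kp in H3. apply E in H3; auto. lra. }
  intro x. pose proof (D _ _ H1 H2 K1 K2 x). pose proof (D _ _ H2 H1 K2 K1 x). lra.
Qed.

Lemma quot_val_eq (A : PavAlg) (F : A -> Prop) phi x :
  is_std_hom A phi -> (forall a, phi a = 1 <-> F a) -> quot_val A F x = phi x.
Proof.
  intros Hp K. unfold quot_val.
  match goal with |- epsilon ?i ?P = _ => 
    assert (HP : P (epsilon i P)) by (apply epsilon_spec; exists (phi x), phi; auto) end.
  destruct HP as [phi' [H1 [H2 H3]]]. rewrite <- H3. apply (sh_unique A F); auto.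
Qed.

Section EX.
Variable A : PavAlg.
Variable F : A -> Prop.
Hypothesis HF : is_max_filter F.
Local Notation c := (pav_c A).

Lemma HFf : is_filter F. Proof. apply HF. Qed.

Lemma c1 : c 1 = mv_one.
Proof.
  pose proof (pav_c_neg A 0 rat01_0) as H. rewrite pav_c0 in H.
  replace (1 - 0) with 1 in H by lra. rewrite <- H. reflexivity.
Qed.

Lemma c_imp r s : rat01 r -> rat01 s -> mv_imp (c r) (c s) = c (Rmin (1 - r + s) 1).
Proof.
  intros. unfold mv_imp. rewrite pav_c_neg, pav_c_oplus; auto. apply rat01_c; auto.
Qed.

Lemma c_mul r s : rat01 r -> rat01 s -> mv_mul (c r) (c s) = c (1 - Rmin ((1 - r) + (1 - s)) 1).
Proof.
  intros. unfold mv_mul. rewrite !pav_c_neg, pav_c_oplus, pav_c_neg; auto;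
  try apply rat01_c; auto. apply rat01_min; apply rat01_c; auto.
Qed.

Lemma F_all x : F mv_zero -> F x.
Proof. intro. apply (F_up _ F mv_zero); auto. apply HFf. apply mle_0. Qed.

Lemma c_notF t : rat01 t -> t < 1 -> ~ F (c t).
Proof.
  intros Ht Ht1 Hc.
  assert (forall n : nat, exists u, rat01 u /\ u <= Rmax 0 (1 - INR n * (1 - t)) /\ F (c u)).
  { induction n.
    - exists 1. split. apply rat01_1. split. simpl. rmin. rewrite c1. apply F_one, HFf.
    - destruct IHn as [u [Hu [Hu1 Hu2]]].
      exists (1 - Rmin ((1 - t) + (1 - u)) 1). split.
      apply rat01_c, rat01_min; apply rat01_c; auto.
      split. rewrite S_INR. destruct Ht, Hu. rmin.
      rewrite <- c_mul; auto. apply F_mul; auto. apply HFf. }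
  destruct (INR_archimed (1 - t) 1) as [n Hn]. lra.
  destruct (H n) as [u [Hu [Hu1 Hu2]]].
  assert (u = 0). { destruct Hu. rmin. }
  subst. rewrite pav_c0 in Hu2.
  destruct HF as [[_ [y Hy]] _]. apply Hy. apply F_all; auto.
Qed.

Lemma F_trans x y z : F (mv_imp x y) -> F (mv_imp y z) -> F (mv_imp x z).
Proof.
  intros. apply (F_up _ F _ _ HFf (F_mul _ F _ _ HFf H H0)). apply imp_trans.
Qed.

Lemma c_le r s : rat01 r -> rat01 s -> F (mv_imp (c s) (c r)) -> s <= r.
Proof.
  intros Hr Hs H. rewrite c_imp in H; auto.
  destruct (Rle_dec s r); auto. exfalso.
  apply (c_notF (Rmin (1 - s + r) 1)); auto.
  replace (1 - s + r) with ((1 - s) + r) by ring. apply rat01_min; auto. apply rat01_c; auto.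
  rmin.
Qed.

Definition Eset (x : A) := fun r => rat01 r /\ F (mv_imp (c r) x).
Lemma Eset_bnd x : bound (Eset x).
Proof. exists 1. intros r [[_ H] _]. lra. Qed.
Lemma imp0 x : mv_imp (@mv_zero A) x = mv_one.
Proof. unfold mv_imp. apply o1l. Qed.
Lemma Eset_ne x : exists r, Eset x r.
Proof.
  exists 0. split. apply rat01_0. rewrite pav_c0, imp0. apply F_one, HFf.
Qed.
Definition phi (x : A) : R := proj1_sig (completeness (Eset x) (Eset_bnd x) (Eset_ne x)).
Lemma phi_lub x : is_lub (Eset x) (phi x).
Proof. unfold phi. destruct completeness; auto. Qed.

Lemma phi_lb r x : rat01 r -> F (mv_imp (c r) x) -> r <= phi x.
Proof. intros. apply phi_lub. split; auto. Qed.
Lemma phi_ub r x : rat01 r -> F (mv_imp x (c r)) -> phi x <= r.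
Proof.
  intros Hr H. apply phi_lub. intros s [Hs H2]. apply c_le; auto.
  eapply F_trans; eauto.
Qed.
Lemma phi_01 x : 0 <= phi x <= 1.
Proof.
  split. apply phi_lb. apply rat01_0. rewrite pav_c0, imp0. apply F_one, HFf.
  apply phi_lub. intros r [[_ H] _]. lra.
Qed.
Lemma phi_ub' r x : rat01 r -> ~ F (mv_imp (c r) x) -> phi x <= r.
Proof.
  intros Hr H. apply phi_ub; auto. destruct (mv_linear _ F (c r) x HF); tauto.
Qed.
Lemma phi_lb' r x : rat01 r -> r < phi x -> F (mv_imp (c r) x).
Proof.
  intros Hr H. apply NNPP. intro H'. apply phi_ub' in H'; auto. lra.
Qed.
Lemma phi_ub'' r x : rat01 r -> phi x < r -> F (mv_imp x (c r)).
Proof.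
  intros Hr H. destruct (mv_linear _ F (c r) x HF) as [H1|H1]; auto.
  apply phi_lb in H1; auto. lra.
Qed.

Lemma lower_approx x e : 0 < e -> exists r, rat01 r /\ F (mv_imp (c r) x) /\ phi x - e < r.
Proof.
  intro He. pose proof (phi_01 x).
  destruct (Rlt_dec (phi x - e) 0).
  - exists 0. split. apply rat01_0. split; auto. rewrite pav_c0, imp0. apply F_one, HFf.
  - destruct (dense01 (phi x - e) (phi x)) as [r [Hr Hr2]]; try lra.
    exists r. split; auto. split. apply phi_lb'; auto. lra. lra.
Qed.
Lemma upper_approx x e : 0 < e -> exists r, rat01 r /\ F (mv_imp x (c r)) /\ r < phi x + e.
Proof.
  intro He. pose proof (phi_01 x).
  destruct (Rlt_dec 1 (phi x + e)).
  - exists 1. split. apply rat01_1. split; auto. rewrite c1. unfold mv_imp. rewrite o1.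
    apply F_one, HFf.
  - destruct (dense01 (phi x) (phi x + e)) as [r [Hr Hr2]]; try lra.
    exists r. split; auto. split. apply phi_ub''; auto. lra. lra.
Qed.

Lemma key_neg r x : rat01 r -> mv_imp (c r) (mv_neg x) = mv_imp x (c (1 - r)).
Proof. intro. unfold mv_imp. rewrite pav_c_neg; auto. apply oC. Qed.

Lemma phi_neg x : phi (mv_neg x) = 1 - phi x.
Proof.
  pose proof (phi_01 x). pose proof (phi_01 (mv_neg x)).
  destruct (Rtotal_order (phi (mv_neg x)) (1 - phi x)) as [Hl|[He|Hg]]; auto; exfalso.
  - destruct (dense01 (phi (mv_neg x)) (1 - phi x)) as [r [Hr Hr2]]; try lra.
    assert (~ F (mv_imp (c r) (mv_neg x))). { intro H1. apply phi_lb in H1; auto. lra. }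
    rewrite key_neg in H1; auto.
    destruct (mv_linear _ F x (c (1 - r)) HF) as [H2|H2]. tauto.
    apply phi_lb in H2. lra. apply rat01_c; auto.
  - destruct (dense01 (1 - phi x) (phi (mv_neg x))) as [r [Hr Hr2]]; try lra.
    assert (F (mv_imp (c r) (mv_neg x))). { apply phi_lb'; auto. lra. }
    rewrite key_neg in H1; auto. apply phi_ub in H1. lra. apply rat01_c; auto.
Qed.

Lemma F_imp_oplus a b a' b' : F (mv_imp a b) -> F (mv_imp a' b') ->
  F (mv_imp (mv_oplus a a') (mv_oplus b b')).
Proof.
  intros. apply (F_up _ F _ _ HFf (F_mul _ F _ _ HFf H H0)). apply imp_oplus.
Qed.

Lemma phi_oplus x y : phi (mv_oplus x y) = Rmin (phi x + phi y) 1.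
Proof.
  pose proof (phi_01 x). pose proof (phi_01 y). pose proof (phi_01 (mv_oplus x y)).
  set (m := Rmin (phi x + phi y) 1).
  destruct (Rtotal_order (phi (mv_oplus x y)) m) as [Hl|[He|Hg]]; auto; exfalso.
  - set (d := m - phi (mv_oplus x y)).
    destruct (lower_approx x (d / 3)) as [r [Hr [Fr Hr2]]]. unfold d; lra.
    destruct (lower_approx y (d / 3)) as [s [Hs [Fs Hs2]]]. unfold d; lra.
    pose proof (F_imp_oplus _ _ _ _ Fr Fs) as H2.
    rewrite pav_c_oplus in H2; auto. apply phi_lb in H2. 2: apply rat01_min; auto.
    unfold d, m in *. destruct Hr, Hs. rmin.
  - set (d := phi (mv_oplus x y) - m).
    destruct (upper_approx x (d / 3)) as [r [Hr [Fr Hr2]]]. unfold d; lra.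
    destruct (upper_approx y (d / 3)) as [s [Hs [Fs Hs2]]]. unfold d; lra.
    pose proof (F_imp_oplus _ _ _ _ Fr Fs) as H2.
    rewrite pav_c_oplus in H2; auto. apply phi_ub in H2. 2: apply rat01_min; auto.
    unfold d, m in *. destruct Hr, Hs. rmin.
Qed.

Lemma Fimp_refl x : F (mv_imp x x).
Proof. pose proof (mle_refl _ x) as H. unfold mv_le in H. unfold mv_imp. rewrite H. apply F_one, HFf. Qed.

Lemma phi_c r : rat01 r -> phi (c r) = r.
Proof.
  intro Hr. pose proof (Fimp_refl (c r)).
  apply Rle_antisym. apply phi_ub; auto. apply phi_lb; auto.
Qed.

Lemma phi_zero : phi mv_zero = 0.
Proof. rewrite <- pav_c0. apply phi_c, rat01_0. Qed.

Lemma phi_hom : is_std_hom A phi.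
Proof.
  split. apply phi_01. split. intros. unfold luk_oplus. apply phi_oplus.
  split. intros. unfold luk_neg. apply phi_neg. split. apply phi_zero. apply phi_c.
Qed.

Lemma phi_ker a : phi a = 1 <-> F a.
Proof.
  split.
  - intro H. apply NNPP. intro Ha.
    destruct (max_gen _ F a HF Ha) as [n Hn].
    assert (forall k, phi (mpow _ a k) = 1).
    { induction k; simpl.
      - pose proof (sh_one A phi phi_hom). auto.
      - rewrite (sh_mul A phi phi_hom), IHk, H. unfold luk_mul, luk_neg, luk_oplus. rmin. }
    assert (phi (mv_neg (mpow _ a n)) = 1).
    { apply Rle_antisym. apply phi_01. apply phi_lb. apply rat01_1.
      rewrite c1. unfold mv_imp. rewrite n1, o0l. auto. }
    rewrite phi_neg, H0 in H1. lra.
  - intro H. apply Rle_antisym. apply phi_01. apply phi_lb. apply rat01_1.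
    rewrite c1. unfold mv_imp. rewrite n1, o0l. auto.
Qed.
End EX.

Lemma exists_hom (A : PavAlg) (F : A -> Prop) : is_max_filter F ->
  exists phi, is_std_hom A phi /\ (forall a, phi a = 1 <-> F a).
Proof.
  intro HF. exists (phi A F HF). split. apply phi_hom. apply phi_ker.
Qed.

Lemma inf_exists {I : Type} (h : I -> R) : (forall i, 0 <= h i <= 1) -> exists m, is_inf01 h m.
Proof.
  intro Hh. destruct (classic (exists i : I, True)) as [[i0 _]|Hn].
  - set (E := fun z => exists i, z = - h i).
    assert (Hb : bound E). { exists 0. intros z [i ->]. pose proof (Hh i). lra. }
    assert (He : exists z, E z). { exists (- h i0). exists i0; auto. }
    destruct (completeness E Hb He) as [l [Hl1 Hl2]].
    exists (- l). split; [|split].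
    + assert (- h i0 <= l) by (apply Hl1; exists i0; auto).
      assert (l <= 0). { apply Hl2. intros z [i ->]. pose proof (Hh i). lra. }
      pose proof (Hh i0). lra.
    + intro i. assert (- h i <= l) by (apply Hl1; exists i; auto). lra.
    + intros l' _ Hl'. assert (l <= - l'). { apply Hl2. intros z [i ->]. pose proof (Hl' i). lra. }
      lra.
  - exists 1. split. lra. split. intro i. exfalso. apply Hn. exists i. auto.
    intros l Hl _. lra.
Qed.

Lemma inf01_spec {I : Type} (h : I -> R) : (forall i, 0 <= h i <= 1) -> is_inf01 h (inf01 h).
Proof. intro. unfold inf01. apply epsilon_spec. apply inf_exists; auto. Qed.

Lemma inf01_eq {I : Type} (h : I -> R) m : is_inf01 h m -> inf01 h = m.
Proof.
  intro Hm. assert (H : is_inf01 h (inf01 h)). { unfold inf01. apply epsilon_spec. eauto. }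
  destruct Hm as [Hm1 [Hm2 Hm3]]. destruct H as [H1 [H2 H3]].
  apply Rle_antisym; auto.
Qed.

Lemma part1 : forall (I J : Type) (Rel : I -> J -> R),
     (forall i j, Rel i j = 0 \/ Rel i j = 1) ->
     forall x y : I -> R,
       (forall i, 0 <= x i <= 1) -> (forall i, 0 <= y i <= 1) ->
       forall j : J,
         luk_mul (fR Rel x j) (fR Rel y j) <= fR Rel (fun i => luk_mul (x i) (y i)) j.
Proof.
  intros I J Rel HR x y Hx Hy j.
  assert (B : forall z : I -> R, (forall i, 0 <= z i <= 1) ->
            forall i, 0 <= luk_imp (Rel i j) (z i) <= 1).
  { intros z Hz i. pose proof (Hz i). unfold luk_imp, luk_oplus, luk_neg.
    destruct (HR i j) as [E|E]; rewrite E; rmin. }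
  assert (Hxy : forall i, 0 <= luk_mul (x i) (y i) <= 1).
  { intro i. pose proof (Hx i). pose proof (Hy i). unfold luk_mul, luk_neg, luk_oplus. rmin. }
  unfold fR.
  destruct (inf01_spec _ (B x Hx)) as [Ha1 [Ha2 _]].
  destruct (inf01_spec _ (B y Hy)) as [Hb1 [Hb2 _]].
  destruct (inf01_spec _ (B _ Hxy)) as [_ [_ Hc3]].
  set (a := inf01 (fun i => luk_imp (Rel i j) (x i))) in *.
  set (b := inf01 (fun i => luk_imp (Rel i j) (y i))) in *.
  apply Hc3.
  - unfold luk_mul, luk_neg, luk_oplus. rmin.
  - intro i. specialize (Ha2 i). specialize (Hb2 i). simpl in *.
    pose proof (Hx i). pose proof (Hy i).
    unfold luk_imp, luk_mul, luk_neg, luk_oplus in *.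
    destruct (HR i j) as [E|E]; rewrite E in *; rmin.
Qed.

Lemma part2 : forall (A B : PavAlg) (f : A -> B) (g : B -> A),
     is_semisimple A -> is_semisimple B ->
     adjoint A B f g ->
     (forall x y : A, mv_le (mv_mul (f x) (f y)) (f (mv_mul x y))) ->
     forall (F : SpecM A) (G : SpecM B),
       relR A B f F G = 0 \/ relR A B f F G = 1.
Proof.
  intros A B f g _ _ [_ [_ [Hadj Hc]]] Hm [F HF] [G HG].
  destruct (exists_hom A F HF) as [phi [Hp Kp]].
  destruct (exists_hom B G HG) as [psi [Hq Kq]].
  unfold relR. simpl.
  replace (fun a : A => luk_imp (quot_val B G (f a)) (quot_val A F a))
    with (fun a : A => luk_imp (psi (f a)) (phi a)).
  2:{ apply functional_extensionality. intro a. rewrite (quot_val_eq B G psi), (quot_val_eq A F phi); auto. }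
  destruct (classic (exists a, phi a < psi (f a))) as [[a Ha]|Hn].
  - left. apply inf01_eq.
    pose proof (sh_01 A phi Hp a). pose proof (sh_01 B psi Hq (f a)).
    destruct (dense01 (phi a) (psi (f a))) as [r [Hr Hr2]]; try lra.
    set (a' := mv_imp (pav_c A r) a).
    assert (P1 : phi a' = 1 - r + phi a).
    { unfold a'. rewrite (sh_imp A phi Hp), (sh_c A phi Hp); auto. rmin. }
    assert (P2 : psi (f a') = 1).
    { unfold a'. rewrite <- Hc; auto. rewrite (sh_imp B psi Hq), (sh_c B psi Hq); auto. rmin. }
    set (d := r - phi a).
    assert (Q1 : forall k, phi (mpow _ a' k) <= Rmax 0 (1 - INR k * d)).
    { induction k; cbn [mpow].
      - rewrite (sh_one A phi Hp). simpl INR. rmin.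
      - rewrite (sh_mul A phi Hp), P1. rewrite S_INR. unfold d in *.
        pose proof (sh_01 A phi Hp (mpow _ a' k)). unfold luk_mul, luk_neg, luk_oplus. rmin. }
    assert (Q2 : forall k, psi (f (mpow _ a' k)) = 1).
    { induction k; simpl.
      - apply Rle_antisym. apply (sh_01 B psi Hq).
        rewrite <- (sh_one B psi Hq). apply (sh_le B psi Hq). apply Hadj. apply mle_1.
      - apply Rle_antisym. apply (sh_01 B psi Hq).
        apply Rle_trans with (psi (mv_mul (f a') (f (mpow _ a' k)))).
        rewrite (sh_mul B psi Hq), P2, IHk. unfold luk_mul, luk_neg, luk_oplus. rmin.
        apply (sh_le B psi Hq). apply Hm. }
    destruct (INR_archimed d 1) as [n Hn]. unfold d; lra.
    assert (Z : luk_imp (psi (f (mpow _ a' n))) (phi (mpow _ a' n)) = 0).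
    { rewrite Q2. specialize (Q1 n). pose proof (sh_01 A phi Hp (mpow _ a' n)).
      unfold luk_imp, luk_oplus, luk_neg. rmin. }
    split. lra. split.
    + intro b. pose proof (sh_01 A phi Hp b). pose proof (sh_01 B psi Hq (f b)).
      unfold luk_imp, luk_oplus, luk_neg. rmin.
    + intros l _ Hl. specialize (Hl (mpow _ a' n)). simpl in Hl. lra.
  - right. apply inf01_eq. split. lra. split.
    + intro b. assert (~ phi b < psi (f b)) by (intro; apply Hn; eauto).
      pose proof (sh_01 A phi Hp b). pose proof (sh_01 B psi Hq (f b)).
      unfold luk_imp, luk_oplus, luk_neg. rmin.
    + intros l Hl _. lra.
Qed.

Theorem theorem10 :
  (forall (I J : Type) (Rel : I -> J -> R),
     (forall i j, Rel i j = 0 \/ Rel i j = 1) ->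
     forall x y : I -> R,
       (forall i, 0 <= x i <= 1) -> (forall i, 0 <= y i <= 1) ->
       forall j : J,
         luk_mul (fR Rel x j) (fR Rel y j) <= fR Rel (fun i => luk_mul (x i) (y i)) j)
  /\
  (forall (A B : PavAlg) (f : A -> B) (g : B -> A),
     is_semisimple A -> is_semisimple B ->
     adjoint A B f g ->
     (forall x y : A, mv_le (mv_mul (f x) (f y)) (f (mv_mul x y))) ->
     forall (F : SpecM A) (G : SpecM B),
       relR A B f F G = 0 \/ relR A B f F G = 1).
Proof. split. apply part1. apply part2. Qed.
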